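(* Let $R$ be an associative (unital) ring and let $\sigma\colon R\to R$ be an additive bijection with $\sigma(1)=1$. If $R$ is right Noetherian, then the non-associative skew Laurent series ring $R((X;\sigma))$ is right Noetherian.
   Context: A right ideal of a non-associative ring $S$ is an additive subgroup $I$ with $Is\subseteq I$ for all $s\in S$; $S$ is right Noetherian if it satisfies the ascending chain condition on right ideals. $R((X;\sigma))$ is the set of formal series $\sum_{i\in\mathbb{Z}} r_iX^i$ with $r_i\in R$ and $r_i=0$ for all sufficiently negative $i$, with pointwise addition and multiplication $\left(\sum_m a_mX^m\right)\left(\sum_n b_nX^n\right)=\sum_{k}\left(\sum_{m+n=k}a_m\sigma^m(b_n)\right)X^k$ (finite inner sums), i.e. the extension of $(rX^m)(sX^n)=(r\sigma^m(s))X^{m+n}$ for $r,s\in R$, $m,n\in\mathbb{Z}$, where $\sigma^m$ for $m<0$ is a power of $\sigma^{-1}$; it is a unital, not necessarily associative ring. *)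

(* Defs.v *)
From Stdlib Require Import ClassicalEpsilon.
From mathcomp Require Import all_boot all_order all_algebra.
Set Implicit Arguments. Unset Strict Implicit. Unset Printing Implicit Defensive.
Import Order.TTheory GRing.Theory Num.Theory.
Local Open Scope ring_scope.

(* Generic notions for a (not necessarily associative) ring whose elements
   are the elements of T satisfying the carrier predicate S, with the given
   zero, addition, negation and multiplication. *)
Definition right_ideal (T : Type) (S : T -> Prop) (zero : T) (add : T -> T -> T)
  (opp : T -> T) (mul : T -> T -> T) (I : T -> Prop) : Prop :=
  [/\ (forall x, I x -> S x),
      I zero,
      (forall x y, I x -> I y -> I (add x y)),
      (forall x, I x -> I (opp x)) &
      (forall x s, I x -> S s -> I (mul x s))].

Definition right_noetherian (T : Type) (S : T -> Prop) (zero : T)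
  (add : T -> T -> T) (opp : T -> T) (mul : T -> T -> T) : Prop :=
  forall I : nat -> T -> Prop,
    (forall n, right_ideal S zero add opp mul (I n)) ->
    (forall n x, I n x -> I n.+1 x) ->
    exists N : nat, forall n, (N <= n)%N -> forall x, I n x <-> I N x.

Section Laurent.
Variable R : pzRingType.

Definition ring_right_noetherian : Prop :=
  right_noetherian (fun _ : R => True) 0 +%R -%R *%R.

Definition sinv (sigma : R -> R) (y : R) : R :=
  epsilon (inhabits 0) (fun x => sigma x = y).

Definition spow (sigma : R -> R) (m : int) (x : R) : R :=
  match m with
  | Posz n => iter n sigma x
  | Negz n => iter n.+1 (sinv sigma) x
  end.

Definition series := int -> R.

Definition is_laurent (f : series) : Prop :=
  exists N : int, forall i, i < N -> f i = 0.

Definition lb (f : series) : int :=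
  epsilon (inhabits 0) (fun N : int => forall i, i < N -> f i = 0).

Definition szero : series := fun _ => 0.
Definition sadd (f g : series) : series := fun i => f i + g i.
Definition sopp (f : series) : series := fun i => - f i.

(* (f g)_k = sum_{m + n = k} f_m sigma^m (g_n), the sum being over
   lb f <= m <= k - lb g (all other terms vanish for Laurent series). *)
Definition smul (sigma : R -> R) (f g : series) : series := fun k =>
  \sum_(j < absz (Num.max 0 (k - lb f - lb g + 1)))
     f (lb f + j%:Z) * spow sigma (lb f + j%:Z) (g (k - (lb f + j%:Z))).

Definition laurent_right_noetherian (sigma : R -> R) : Prop :=
  right_noetherian is_laurent szero sadd sopp (smul sigma).

End Laurent.

(* Main.v *)
Require Import Defs.
From Stdlib Require Import ClassicalEpsilon Classical FunctionalExtensionality.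
From mathcomp Require Import all_boot all_order all_algebra zify.
Import Order.TTheory GRing.Theory Num.Theory.
Local Open Scope ring_scope.

Local Arguments spow : simpl never.
Section Aux.
Variable R : pzRingType.
Variable sigma : R -> R.
Hypothesis sigma_add : forall x y : R, sigma (x + y) = sigma x + sigma y.
Hypothesis sigma_bij : bijective sigma.
Hypothesis sigma1 : sigma 1 = 1.

Lemma sigma0 : sigma 0 = 0.
Proof.
have := sigma_add 0 0; rewrite addr0 => /(congr1 (fun x => x - sigma 0)).
by rewrite subrr addrK => <-.
Qed.

Lemma sinv_spec y : sigma (sinv sigma y) = y.
Proof.
rewrite /sinv; apply: (epsilon_spec (inhabits 0) (fun x => sigma x = y)).
case: sigma_bij => g _ gK; by exists (g y).
Qed.

Lemma sigma_inj : injective sigma.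
Proof. exact: bij_inj. Qed.

Lemma sinv0 : sinv sigma 0 = 0.
Proof. apply: sigma_inj; by rewrite sinv_spec sigma0. Qed.

Lemma sinv1 : sinv sigma 1 = 1.
Proof. apply: sigma_inj; by rewrite sinv_spec sigma1. Qed.

Lemma iter_fix (f : R -> R) x n : f x = x -> iter n f x = x.
Proof. move=> fx; elim: n => //= n ->; exact fx. Qed.

Lemma spow0 m : spow sigma m 0 = 0.
Proof.
case: m => n; rewrite /spow; first exact: iter_fix sigma0.
apply: iter_fix; exact: sinv0.
Qed.

Lemma spow1 m : spow sigma m 1 = 1.
Proof.
case: m => n; rewrite /spow; first exact: iter_fix sigma1.
apply: iter_fix; exact: sinv1.
Qed.

Lemma spowz0 x : spow sigma 0 x = x.
Proof. by []. Qed.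

Lemma window_canon (T : int -> R) (A L : int) (N M : nat) :
  (forall m, m < A \/ A + N%:Z <= m -> T m = 0) ->
  L <= A -> A + N%:Z <= L + M%:Z ->
  \sum_(j < N) T (A + j%:Z) = \sum_(j < M) T (L + j%:Z).
Proof.
move=> Tz LA AM.
case: N Tz AM => [|N] Tz AM.
  rewrite big_ord0 big1 // => j _; apply: Tz; lia.
have [p Hp] : exists p : nat, p%:Z = A - L by exists (absz (A - L)); lia.
have Mge : (p + N.+1 <= M)%N by lia.
have -> : M = (p + (N.+1 + (M - (p + N.+1))))%N by lia.
rewrite [RHS]big_split_ord /= [X in _ = X + _]big1 ?add0r; last first.
  move=> j _; apply: Tz; have := ltn_ord j; lia.
rewrite [RHS]big_split_ord /= [X in _ = _ + X]big1 ?addr0; last first.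
  move=> j _; apply: Tz; lia.
apply: eq_bigr => j _; congr T; lia.
Qed.

Lemma window_eq (T : int -> R) (A1 A2 : int) (N1 N2 : nat) :
  (forall m, m < A1 \/ A1 + N1%:Z <= m -> T m = 0) ->
  (forall m, m < A2 \/ A2 + N2%:Z <= m -> T m = 0) ->
  \sum_(j < N1) T (A1 + j%:Z) = \sum_(j < N2) T (A2 + j%:Z).
Proof.
move=> T1 T2.
pose L := Num.min A1 A2.
pose M := absz (Num.max (A1 + N1%:Z) (A2 + N2%:Z) - L)%R.
rewrite (@window_canon T A1 L N1 M T1); [|rewrite /L; lia|rewrite /L /M; lia].
rewrite (@window_canon T A2 L N2 M T2) //; [rewrite /L; lia|rewrite /L /M; lia].
Qed.


Lemma lb_spec (f : series R) A : (forall i, i < A -> f i = 0) ->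
  forall i, i < lb f -> f i = 0.
Proof.
move=> fA; rewrite /lb.
by apply: (epsilon_spec (inhabits 0) (fun N : int => forall i, i < N -> f i = 0)); exists A.
Qed.

Lemma smulE (f g : series R) (A B k : int) (N : nat) :
  (forall i, i < A -> f i = 0) -> (forall i, i < B -> g i = 0) ->
  k - B < A + N%:Z ->
  smul sigma f g k =
  \sum_(j < N) f (A + j%:Z) * spow sigma (A + j%:Z) (g (k - (A + j%:Z))).
Proof.
move=> fA gB kN; rewrite /smul.
have fl := @lb_spec f A fA; have gl := @lb_spec g B gB.
apply: (@window_eq (fun m => f m * spow sigma m (g (k - m)))) => m [Hm|Hm].
- by rewrite fl ?mul0r.
- by rewrite gl ?spow0 ?mulr0 //; lia.
- by rewrite fA ?mul0r.
- by rewrite gB ?spow0 ?mulr0 //; lia.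
Qed.


Definition vanish (f : series R) (A : int) := forall i, i < A -> f i = 0.
Definition mono (c : R) (n : int) : series R := fun j => if j == n then c else 0.

Lemma mono_vanish c n : vanish (mono c n) n.
Proof. move=> i Hi; rewrite /mono ifN //; apply/eqP; lia. Qed.

Lemma mono_laurent c n : is_laurent (mono c n).
Proof. exists n; exact: mono_vanish. Qed.

Lemma smul_mono_low f A c n j : vanish f A -> j < A + n ->
  smul sigma f (mono c n) j = 0.
Proof.
move=> fA jA; rewrite (@smulE f (mono c n) A n j 0) ?big_ord0 //.
  exact: mono_vanish.
lia.
Qed.

Lemma smul_mono_at f A c n : vanish f A ->
  smul sigma f (mono c n) (A + n) = f A * spow sigma A c.
Proof.
move=> fA; rewrite (@smulE f (mono c n) A n (A + n) 1) //; last first.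
- lia.
- exact: mono_vanish.
rewrite big_ord1 /= addr0 /mono ifT //; apply/eqP; lia.
Qed.

Definition RI (J : series R -> Prop) :=
  right_ideal (@is_laurent R) (szero R) (@sadd R) (@sopp R) (smul sigma) J.

Lemma ri_laurent J x : RI J -> J x -> is_laurent x.
Proof. by case=> H _ _ _ _; apply: H. Qed.
Lemma ri_zero J : RI J -> J (szero R).
Proof. by case. Qed.
Lemma ri_add J x y : RI J -> J x -> J y -> J (sadd x y).
Proof. by case=> _ _ H _ _; apply: H. Qed.
Lemma ri_opp J x : RI J -> J x -> J (sopp x).
Proof. by case=> _ _ _ H _; apply: H. Qed.
Lemma ri_mul J x s : RI J -> J x -> is_laurent s -> J (smul sigma x s).
Proof. by case=> _ _ _ _ H; apply: H. Qed.

Fixpoint ssum (n : nat) (F : nat -> series R) : series R :=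
  if n is n'.+1 then sadd (ssum n' F) (F n') else szero R.

Lemma ssumE n F k : ssum n F k = \sum_(i < n) F i k.
Proof.
elim: n => [|n IH] /=; first by rewrite big_ord0.
by rewrite big_ord_recr /= -IH.
Qed.

Lemma ri_ssum J n F : RI J -> (forall i, (i < n)%N -> J (F i)) -> J (ssum n F).
Proof.
move=> RJ; elim: n => [|n IH] HF /=; first exact: ri_zero.
apply: ri_add => //; [apply: IH => i Hi; apply: HF; lia | apply: HF; lia].
Qed.

Definition Lc (J : series R -> Prop) (x : R) :=
  exists f, J f /\ vanish f 0 /\ f 0 = x.

Lemma Lc_shift J r k : RI J -> J r -> vanish r k -> Lc J (r k).
Proof.
move=> RJ Jr rk; exists (smul sigma r (mono 1 (- k))); split; [|split].
- apply: ri_mul => //; exact: mono_laurent.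
- move=> i Hi; apply: (@smul_mono_low r k 1 (-k) i rk); lia.
- by rewrite -{1}(subrr k) (@smul_mono_at r k 1 (-k) rk) spow1 mulr1.
Qed.

Lemma Lc_ideal J : RI J -> right_ideal (fun _ : R => True) 0 +%R -%R *%R (Lc J).
Proof.
move=> RJ; split => //.
- exists (szero R); split; [exact: ri_zero|by split].
- move=> x y [f [Jf [f0 fx]]] [g [Jg [g0 gy]]]; exists (sadd f g); split.
    exact: ri_add.
  split; last by rewrite /sadd fx gy.
  by move=> i Hi; rewrite /sadd f0 ?g0 ?addr0.
- move=> x [f [Jf [f0 fx]]]; exists (sopp f); split; first exact: ri_opp.
  split; last by rewrite /sopp fx.
  by move=> i Hi; rewrite /sopp f0 ?oppr0.
- move=> x s [f [Jf [f0 fx]]] _; exists (smul sigma f (mono s 0)); split.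
    apply: ri_mul => //; exact: mono_laurent.
  split.
    move=> i Hi; apply: (@smul_mono_low f 0 s 0 i f0); lia.
  by rewrite -{1}(addr0 0) (@smul_mono_at f 0 s 0 f0) fx.
Qed.


Definition spanR (s : seq R) (x : R) :=
  exists c : nat -> R, x = \sum_(i < size s) s`_i * c i.

Lemma span_ideal s : right_ideal (fun _ : R => True) 0 +%R -%R *%R (spanR s).
Proof.
split => //.
- by exists (fun _ => 0); rewrite big1 // => i _; rewrite mulr0.
- move=> x y [c ->] [d ->]; exists (fun i => c i + d i).
  by rewrite -big_split /=; apply: eq_bigr => i _; rewrite mulrDr.
- move=> x [c ->]; exists (fun i => - c i).
  by rewrite -sumrN; apply: eq_bigr => i _; rewrite mulrN.
- move=> x r [c ->] _; exists (fun i => c i * r).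
  by rewrite mulr_suml; apply: eq_bigr => i _; rewrite mulrA.
Qed.

Lemma span_rcons s y x : spanR s x -> spanR (rcons s y) x.
Proof.
move=> [c ->]; exists (fun i => if (i < size s)%N then c i else 0).
rewrite size_rcons big_ord_recr /= ltnn mulr0 addr0.
by apply: eq_bigr => i _; rewrite nth_rcons ltn_ord.
Qed.

Fixpoint build (p : seq R -> R) (k : nat) : seq R :=
  if k is k'.+1 then rcons (build p k') (p (build p k')) else [::].

Lemma FG L : ring_right_noetherian R ->
  right_ideal (fun _ : R => True) 0 +%R -%R *%R L ->
  exists s : seq R, (forall i, (i < size s)%N -> L s`_i) /\
                    (forall x, L x -> spanR s x).
Proof.
move=> noeth RL; apply: NNPP => Hno.
have Hpick : forall s, (forall i, (i < size s)%N -> L s`_i) ->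
    exists x, L x /\ ~ spanR s x.
  move=> s Hs; apply: NNPP => Hn; apply: Hno; exists s; split => // x Lx.
  apply: NNPP => Hsp; apply: Hn; by exists x.
pose pick s := epsilon (inhabits (0:R)) (fun x => L x /\ ~ spanR s x).
have Hinv : forall k i, (i < size (build pick k))%N -> L (build pick k)`_i.
  elim => [|k IH] i //=; rewrite size_rcons nth_rcons => Hi.
  case: ltnP => H1; first exact: IH.
  have -> : i == size (build pick k) by apply/eqP; lia.
  exact: (epsilon_spec (inhabits (0:R)) _ (Hpick _ IH)).1.
have [N HN] := noeth (fun k => spanR (build pick k))
   (fun k => span_ideal (build pick k)) (fun k x => @span_rcons _ _ x).
set s := build pick N.
have Hx := epsilon_spec (inhabits (0:R)) _ (Hpick s (Hinv N)).
apply: Hx.2; apply/(HN N.+1 (leqnSn N)) => /=.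
exists (fun i => if i == size s then 1 else 0).
rewrite size_rcons big_ord_recr /= nth_rcons ltnn eqxx mulr1 big1 ?add0r //.
move=> i _; rewrite nth_rcons ltn_ord ifN ?mulr0 //.
apply/eqP; have := ltn_ord i; rewrite /s; lia.
Qed.


Lemma smul_local f H H' d j : vanish f 0 -> vanish H d -> vanish H' d ->
  (forall m, m <= j -> H m = H' m) -> smul sigma f H j = smul sigma f H' j.
Proof.
move=> f0 Hd H'd Hag.
rewrite (@smulE f H 0 d j (absz (j - d)).+1) //; last by lia.
rewrite (@smulE f H' 0 d j (absz (j - d)).+1) //; last by lia.
by apply: eq_bigr => i _; rewrite Hag //; lia.
Qed.

Lemma smul_bump f H H' d k c : vanish f 0 -> vanish H d -> vanish H' d ->
  d <= k -> H k = 0 -> H' k = c -> (forall m, m != k -> H' m = H m) ->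
  smul sigma f H' k = f 0 * c + smul sigma f H k.
Proof.
move=> f0 Hd H'd dk Hk H'k Hne.
rewrite (@smulE f H 0 d k (absz (k - d)).+1) //; last by lia.
rewrite (@smulE f H' 0 d k (absz (k - d)).+1) //; last by lia.
rewrite !big_ord_recl /= !add0r !subr0 Hk H'k !spowz0 mulr0 add0r.
congr (_ + _); apply: eq_bigr => i _; rewrite Hne //.
apply/eqP; rewrite /bump /=; lia.
Qed.


Fixpoint hseq (st : nat -> (nat -> series R) -> (nat -> series R)) (t : nat) :
  nat -> series R :=
  if t is t'.+1 then st t' (hseq st t') else (fun _ _ => 0).

Lemma main_closure (I J : series R -> Prop) (n : nat) (a : nat -> R)
  (fs : nat -> series R) :
  RI I -> RI J -> (forall x, I x -> J x) ->
  (forall i, (i < n)%N -> [/\ I (fs i), vanish (fs i) 0 & fs i 0 = a i]) ->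
  (forall x, Lc J x -> exists c : nat -> R, x = \sum_(i < n) a i * c i) ->
  forall g, J g -> I g.
Proof.
move=> RIi RJ IJ Hfs Hspan g Jg.
have [d gd] := @ri_laurent J g RJ Jg.
pose res (H : nat -> series R) :=
  sadd g (sopp (ssum n (fun i => smul sigma (fs i) (H i)))).
pose coef (x : R) := epsilon (inhabits (fun _ : nat => (0:R)))
  (fun c => x = \sum_(i < n) a i * c i).
pose step (t : nat) (H : nat -> series R) : nat -> series R :=
  fun i j => if j == d + t%:Z then coef (res H (d + t%:Z)) i else H i j.
pose h i j := if j < d then 0 else hseq step (absz (j - d)).+1 i j.
have I1 : forall t i j, j < d \/ d + t%:Z <= j -> hseq step t i j = 0.
  elim => [|t IH] i j Hj //=; rewrite /step ifN; first by apply: IH; lia.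
  apply/eqP; lia.
have Stab : forall t i j, j < d + t%:Z -> hseq step t.+1 i j = hseq step t i j.
  move=> t i j Hj /=; rewrite /step ifN //; apply/eqP; lia.
have Stab' : forall t t' i j, (t <= t')%N -> j < d + t%:Z ->
    hseq step t' i j = hseq step t i j.
  move=> t t' i j; elim: t' => [|t' IH] Ht Hj.
    by have -> : t = 0%N by lia.
  case: (ltnP t t'.+1) => Htt.
  - rewrite Stab; last by lia.
    apply: IH => //; lia.
  - by have -> : t = t'.+1 by lia.
have I2 : forall t i j, d <= j -> j < d + t%:Z -> hseq step t i j = h i j.
  move=> t i j H1 H2; rewrite /h ifN; last by rewrite -leNgt.
  rewrite (Stab' (absz (j - d)).+1 t) //; lia.
have hd : forall i, vanish (h i) d by move=> i j Hj; rewrite /h ifT.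
have Hsd : forall t i, vanish (hseq step t i) d by move=> t i j Hj; apply: I1; left.
have Lau : forall t i, is_laurent (hseq step t i) by move=> t i; exists d; apply: Hsd.
have Jres : forall t, J (res (hseq step t)).
  move=> t; apply: ri_add => //; apply: ri_opp => //; apply: ri_ssum => // i Hi.
  apply: ri_mul => //; apply: IJ; by case: (Hfs i Hi).
have Zres : forall t j, j < d + t%:Z -> res (hseq step t) j = 0.
  elim => [|t IH] j Hj.
    rewrite /res /sadd /sopp ssumE gd; last by lia.
    rewrite big1 ?oppr0 ?addr0 // => i _.
    case: (Hfs i (ltn_ord i)) => _ fi0 _.
    rewrite (@smulE (fs i) (fun _ => 0) 0 (j + 1) j 0) ?big_ord0 //; lia.
  case: (ltP j (d + t%:Z)) => Hjt.
    have -> : res (hseq step t.+1) j = res (hseq step t) j.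
      rewrite /res /sadd /sopp !ssumE; congr (_ - _); apply: eq_bigr => i _.
      case: (Hfs i (ltn_ord i)) => _ fi0 _.
      apply: (@smul_local _ _ _ d) => // m Hm; rewrite Stab //; lia.
    exact: IH.
  have -> : j = d + t%:Z by lia.
  set k := d + t%:Z.
  set c := coef (res (hseq step t) k).
  have Hc : res (hseq step t) k = \sum_(i < n) a i * c i.
    rewrite /c /coef; apply: (epsilon_spec _ (fun c : nat -> R => res (hseq step t) k = \sum_(i < n) a i * c i)); apply: Hspan.
    apply: Lc_shift => // m Hm; apply: IH; lia.
  have Hb : forall i : 'I_n, smul sigma (fs i) (hseq step t.+1 i) k =
      a i * c i + smul sigma (fs i) (hseq step t i) k.
    move=> i; case: (Hfs i (ltn_ord i)) => _ fi0 fia.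
    rewrite -fia; apply: (@smul_bump _ _ _ d) => //.
    - rewrite /k; lia.
    - apply: I1; right; rewrite /k; lia.
    - by rewrite /= /step eqxx.
    - by move=> m Hm; rewrite /= /step (negPf Hm).
  move: Hc; rewrite /res /sadd /sopp !ssumE (eq_bigr _ (fun i _ => Hb i)) big_split /=.
  by move=> Hc; rewrite opprD addrCA Hc addNr.
have Heq : g = ssum n (fun i => smul sigma (fs i) (h i)).
  apply: functional_extensionality => k; rewrite ssumE.
  case: (ltP k d) => Hk.
    rewrite gd // big1 // => i _; case: (Hfs i (ltn_ord i)) => _ fi0 _.
    rewrite (@smulE (fs i) (h i) 0 d k 0) ?big_ord0 //; try lia; exact: hd.
  pose t := (absz (k - d)).+1.
  have Hz : res (hseq step t) k = 0 by apply: Zres; rewrite /t; lia.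
  move: Hz; rewrite /res /sadd /sopp ssumE => /eqP; rewrite subr_eq0 => /eqP ->.
  apply: eq_bigr => i _; case: (Hfs i (ltn_ord i)) => _ fi0 _.
  apply: (@smul_local _ _ _ d) => // m Hm.
  case: (ltP m d) => Hmd; first by rewrite Hsd // hd.
  apply: I2 => //; rewrite /t; lia.
rewrite Heq; apply: ri_ssum => // i Hi; case: (Hfs i Hi) => Ii _ _.
apply: ri_mul => //; exists d; exact: hd.
Qed.


Lemma final : ring_right_noetherian R -> laurent_right_noetherian sigma.
Proof.
move=> noeth I RIn mono.
have RL : forall k, right_ideal (fun _ : R => True) 0 +%R -%R *%R (Lc (I k)).
  by move=> k; apply: Lc_ideal; exact: RIn.
have monoL : forall k x, Lc (I k) x -> Lc (I k.+1) x.
  by move=> k x [f [If [f0 fx]]]; exists f; split; [apply: mono|].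
have [N HN] := noeth (fun k => Lc (I k)) RL monoL.
have [s [Hs Hspan]] := @FG (Lc (I N)) noeth (RL N).
pose fs i := epsilon (inhabits (szero R))
  (fun f => [/\ I N f, vanish f 0 & f 0 = s`_i]).
have Hfs : forall i, (i < size s)%N -> [/\ I N (fs i), vanish (fs i) 0 & fs i 0 = s`_i].
  move=> i Hi; apply: (epsilon_spec _ (fun f => [/\ I N f, vanish f 0 & f 0 = s`_i])).
  by have [f [If [f0 fx]]] := Hs i Hi; exists f.
have monoI : forall m, (N <= m)%N -> forall x, I N x -> I m x.
  elim => [|m IH] Hm x Hx.
    have E : N = 0%N by lia.
    by rewrite E in Hx.
  case: (ltnP N m.+1) => HNm; last first.
    have E : N = m.+1 by lia.
    by rewrite E in Hx.
  by apply: mono; apply: IH => //; lia.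
exists N => m Hm x; split; last exact: monoI.
apply: (@main_closure (I N) (I m) (size s) (fun i => s`_i) fs).
- exact: RIn.
- exact: RIn.
- exact: monoI.
- exact: Hfs.
- by move=> x' Lx'; apply: Hspan; apply/(HN m Hm).
Qed.

End Aux.

Theorem theorem20 (R : pzRingType) (sigma : R -> R)
  (sigma_add : forall x y : R, sigma (x + y) = sigma x + sigma y)
  (sigma_bij : bijective sigma)
  (sigma1 : sigma 1 = 1) :
  ring_right_noetherian R -> laurent_right_noetherian sigma.
Proof. exact: (@final R sigma sigma_add sigma_bij sigma1). Qed.
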